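(* For every $\delta>0$ there exist $n\ge1$, a pool $\mathcal D=\{(p_i,t_i)\}_{i=1}^n$ with $p_i\in[0,1]$, $t_i>0$, and a budget $T>0$, such that the greedy forward selection strategy operating on the usefulness values $u_i=p_i/t_i$ (defined in the context) outputs an ensemble $S$ with majority-voting accuracy $q(S)\le 1/2+\delta$, while there is an index set $\mathcal L\subseteq\{1,\dots,n\}$ with $\sum_{i\in\mathcal L}t_i\le T$ and $q(\mathcal L)\ge 1-\delta$; i.e., its error (optimal constrained accuracy minus output accuracy) can be arbitrarily close to $1/2$.
   Context: A pool consists of candidate members $i=1,\dots,n$, each with accuracy $p_i\in[0,1]$ and cost $t_i>0$; a budget $T>0$ is given; the usefulness of member $i$ is $u_i=p_i/t_i$. For a nonempty index set $\mathcal L$ with $|\mathcal L|=\ell$, the (majority voting) accuracy is $q(\mathcal L)=\sum_{k=\lfloor \ell/2\rfloor+1}^{\ell}\sum_{\mathcal I\subseteq\mathcal L,|\mathcal I|=k}\prod_{i\in\mathcal I}p_i\prod_{j\in\mathcal L\setminus\mathcal I}(1-p_j)$. Greedy forward selection by usefulness: start with $S$ consisting of a single member of maximal usefulness $u_i$; then repeatedly, among the members $j\notin S$ with $\sum_{i\in S}t_i+t_j\le T$, take one of maximal usefulness (ties broken by larger $q(S\cup\{j\})$); if $q(S\cup\{j\})>q(S)$, add $j$ to $S$ and continue, otherwise (or if no such $j$ exists) stop and output $S$. *)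

(* Defs.v *)
From HB Require Import structures.
From mathcomp Require Import all_boot all_order all_algebra.
From mathcomp Require Import reals.
Set Implicit Arguments. Unset Strict Implicit. Unset Printing Implicit Defensive.
Import Order.TTheory GRing.Theory Num.Theory.
Local Open Scope ring_scope.

Section Ensemble.
Variables (R : realType) (n : nat) (p t : 'I_n -> R) (T : R).

(* majority-voting accuracy of an index set L (for L = set0 the sum is empty) *)
Definition q (L : {set 'I_n}) : R :=
  \sum_(I : {set 'I_n} | (I \subset L) && (#|L|./2 < #|I|)%N)
     ((\prod_(i in I) p i) * \prod_(j in L :\: I) (1 - p j)).

Definition cost (L : {set 'I_n}) : R := \sum_(i in L) t i.

Definition usefulness (i : 'I_n) : R := p i / t i.

Definition feasible (S : {set 'I_n}) (j : 'I_n) : Prop :=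
  j \notin S /\ cost S + t j <= T.

Definition greedy_pick (S : {set 'I_n}) (j : 'I_n) : Prop :=
  feasible S j /\
  (forall k, feasible S k -> usefulness k <= usefulness j) /\
  (forall k, feasible S k -> usefulness k = usefulness j ->
             q (k |: S) <= q (j |: S)).

(* greedy_from S S' : starting from current ensemble S, some run of the
   greedy procedure stops and outputs S' *)
Inductive greedy_from : {set 'I_n} -> {set 'I_n} -> Prop :=
| greedy_stop_none S :
    (forall j, ~ feasible S j) -> greedy_from S S
| greedy_stop_noimp S j :
    greedy_pick S j -> q (j |: S) <= q S -> greedy_from S S
| greedy_step S j S' :
    greedy_pick S j -> q S < q (j |: S) -> greedy_from (j |: S) S' ->
    greedy_from S S'.

Definition greedy_output (S : {set 'I_n}) : Prop :=
  exists i0, (forall k, usefulness k <= usefulness i0) /\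
             greedy_from [set i0] S.

End Ensemble.

(* Main.v *)
Require Import Defs.
From HB Require Import structures.
From mathcomp Require Import all_boot all_order all_algebra.
From mathcomp Require Import reals.
From mathcomp Require Import ring lra.
Import Order.TTheory GRing.Theory Num.Theory.
Local Open Scope ring_scope.

Lemma q_set1 (R : realType) (n : nat) (p : 'I_n -> R) (i : 'I_n) :
  q p [set i] = p i.
Proof.
rewrite /q (big_pred1 [set i]).
  by rewrite big_set1 setDv big_set0 mulr1.
move=> I /=; rewrite subset1 cards1 /=.
case: eqP => [->|_] /=; first by rewrite cards1.
by case: eqP => [->|] //=; rewrite cards0.
Qed.

Theorem corollary1 (R : realType) (delta : R) (hdelta : 0 < delta) :
  exists (n : nat) (p t : 'I_n -> R) (T : R),
    [/\ (0 < n)%N, (forall i, 0 <= p i <= 1), (forall i, 0 < t i) & 0 < T] /\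
    (exists S, greedy_output p t T S) /\
    (forall S, greedy_output p t T S -> q p S <= 1 / 2 + delta) /\
    (exists L : {set 'I_n},
       [/\ L != set0, cost t L <= T & 1 - delta <= q p L]).
Proof.
pose p := fun i : 'I_2 => if val i == 0%N then 1 / 2 else 1 : R.
pose t := fun i : 'I_2 => if val i == 0%N then 1 / 4 else 1 : R.
have u0 : usefulness p t ord0 = 2 by rewrite /usefulness /p /t /=; field.
have u1 : usefulness p t ord_max = 1 by rewrite /usefulness /p /t /=; field.
have ord2 : forall k : 'I_2, k = ord0 \/ k = ord_max.
  move=> [[|[|k]] Hk]; [left|right|] => //; exact: val_inj.
have nofeas : forall j, ~ feasible t 1 [set ord0] j.
  move=> j [Hj]; rewrite /cost big_set1.
  case: (ord2 j) => E; subst j; first by move: Hj; rewrite in_set1 eqxx.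
  rewrite /t /=; lra.
have gf : forall S0 S', greedy_from p t 1 S0 S' -> S0 = [set ord0] ->
    S' = [set ord0].
  move=> S0 S' [] //.
  by move=> S j ? [Hf _] _ _ E; subst S; case: (nofeas j Hf).
have go : forall S, greedy_output p t 1 S -> S = [set ord0].
  move=> S [i0 [Hi0 H]].
  case: (ord2 i0) => E; subst i0.
    exact: (gf _ _ H).
  have := Hi0 ord0; rewrite u0 u1 => HH.
  exfalso; lra.
exists 2%N, p, t, 1; split.
  split => //.
  - by move=> i; rewrite /p; case: ifP => _; apply/andP; split; lra.
  - by move=> i; rewrite /t; case: ifP => _; lra.
split.
  exists [set ord0], ord0; split.
    by move=> k; case: (ord2 k) => ->; rewrite ?u0 ?u1; lra.
  exact: greedy_stop_none.
split.
  by move=> S /go ->; rewrite q_set1 /p /=; lra.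
exists [set ord_max]; split.
- by apply/set0Pn; exists ord_max; rewrite in_set1 eqxx.
- by rewrite /cost big_set1 /t /=.
- by rewrite q_set1 /p /=; lra.
Qed.
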